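(* Let $\mathcal{X}, \mathcal{T} \in M_{2^k}(R)$ be two Suslin matrices with $\mathcal{X}\overline{\mathcal{X}} =0$, and let $\mathcal{S} = \begin{pmatrix} a & \mathcal{T}\\ -\overline{\mathcal{T}} & b \end{pmatrix}$. Then \[\begin{pmatrix} 1 & \mathcal{X}\\ 0 & 1 \end{pmatrix} \mathcal{S} \begin{pmatrix} 1 & 0\\ -\overline{\mathcal{X}} & 1 \end{pmatrix} = \begin{pmatrix} a - \langle \mathcal{X},\mathcal{T}\rangle & \mathcal{T} + b\mathcal{X}\\ -\overline{\mathcal{T}} - b\overline{\mathcal{X}} & b \end{pmatrix},\] \[\begin{pmatrix} 1 & 0\\ -\overline{\mathcal{X}} & 1 \end{pmatrix} \mathcal{S} \begin{pmatrix} 1 & \mathcal{X} \\ 0 & 1 \end{pmatrix} = \begin{pmatrix} a & \mathcal{T} + a\mathcal{X}\\ -\overline{\mathcal{T}} -a\overline{\mathcal{X}} & b - \langle \mathcal{X},\mathcal{T}\rangle \end{pmatrix}.\]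
   Context: $R$ is a commutative ring, $a,b\in R$. Suslin matrices $\mathcal{S}_{m}(v,w)$ (size $2^m$) for $v=(a_1,\dots,a_{m+1}),w=(b_1,\dots,b_{m+1})\in R^{m+1}$ are defined recursively by $\mathcal{S}_1(v,w)=\begin{pmatrix} a_1 & a_2\\ -b_2 & b_1\end{pmatrix}$, $\overline{\mathcal{S}_1(v,w)}=\begin{pmatrix} b_1 & -a_2\\ b_2 & a_1\end{pmatrix}$, and $\mathcal{S}_{m}(v,w)=\begin{pmatrix} a_1 & \mathcal{S}_{m-1}(v',w')\\ -\overline{\mathcal{S}_{m-1}(v',w')} & b_1\end{pmatrix}$, $\overline{\mathcal{S}_{m}(v,w)}=\begin{pmatrix} b_1 & -\mathcal{S}_{m-1}(v',w')\\ \overline{\mathcal{S}_{m-1}(v',w')} & a_1\end{pmatrix}$ where $v=(a_1,v')$, $w=(b_1,w')$. They satisfy $\mathcal{S}\overline{\mathcal{S}}=\overline{\mathcal{S}}\mathcal{S}=(v\cdot w^\intercal)I$. The bilinear form is $\langle \mathcal{S}_1,\mathcal{S}_2\rangle = \mathcal{S}_1\overline{\mathcal{S}_2}+\mathcal{S}_2\overline{\mathcal{S}_1}$ (a scalar). *)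

(* Defs.v *)
From HB Require Import structures.
From mathcomp Require Import all_boot all_order all_algebra.
Set Implicit Arguments. Unset Strict Implicit. Unset Printing Implicit Defensive.
Import GRing.Theory.
Local Open Scope ring_scope.

(* Convention: [suslin m v w] is the paper's S_{m+1}(v,w),
   a matrix of size 2^(m+1), for v, w in R^(m+2).  [suslin_bar m v w] is its
   "bar" companion, defined simultaneously by the paper's recursion. *)

Section Suslin.
Variable R : comPzRingType.

Definition rtail n (v : 'rV[R]_n.+1) : 'rV[R]_n := \row_i v 0 (lift ord0 i).

Lemma expS_addn (m : nat) : (2 ^ m.+2 = 2 ^ m.+1 + 2 ^ m.+1)%N.
Proof. by rewrite [(2 ^ m.+2)%N]expnS mul2n -addnn. Qed.

Fixpoint suslin_pair (m : nat) :
  'rV[R]_(m.+2) -> 'rV[R]_(m.+2) -> 'M[R]_(2 ^ m.+1) * 'M[R]_(2 ^ m.+1) :=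
  match m return 'rV[R]_(m.+2) -> 'rV[R]_(m.+2) ->
                 'M[R]_(2 ^ m.+1) * 'M[R]_(2 ^ m.+1) with
  | 0 => fun v w =>
      ((\matrix_(i < 2, j < 2)
          if i == ord0 then (if j == ord0 then v 0 ord0 else v 0 ord_max)
          else (if j == ord0 then - w 0 ord_max else w 0 ord0)) : 'M_(2 ^ 1),
       (\matrix_(i < 2, j < 2)
          if i == ord0 then (if j == ord0 then w 0 ord0 else - v 0 ord_max)
          else (if j == ord0 then w 0 ord_max else v 0 ord0)) : 'M_(2 ^ 1))
  | m'.+1 => fun v w =>
      let p := @suslin_pair m' (rtail v) (rtail w) in
      let e := expS_addn m' in
      (castmx (esym e, esym e)
         (block_mx (v 0 ord0)%:M p.1 (- p.2) (w 0 ord0)%:M),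
       castmx (esym e, esym e)
         (block_mx (w 0 ord0)%:M (- p.1) p.2 (v 0 ord0)%:M))
  end.

Definition suslin m (v w : 'rV[R]_(m.+2)) := (@suslin_pair m v w).1.
Definition suslin_bar m (v w : 'rV[R]_(m.+2)) := (@suslin_pair m v w).2.

Definition suslin_form (m : nat) (v1 w1 v2 w2 : 'rV[R]_(m.+2)) : 'M[R]_(2 ^ m.+1) :=
  @suslin m v1 w1 *m @suslin_bar m v2 w2 + @suslin m v2 w2 *m @suslin_bar m v1 w1.

End Suslin.
Arguments suslin {R} m v w.
Arguments suslin_bar {R} m v w.
Arguments suslin_form {R} m v1 w1 v2 w2.

(* Main.v *)
Require Import Defs.
From HB Require Import structures.
From mathcomp Require Import all_boot all_order all_algebra.
From mathcomp Require Import ring.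
Import GRing.Theory.
Local Open Scope ring_scope.
Set Implicit Arguments.

Lemma cast_mul (R : comPzRingType) n n' (e : n = n') (A B : 'M[R]_n) :
  castmx (e,e) A *m castmx (e,e) B = castmx (e,e) (A *m B).
Proof. by case: n' / e; rewrite !castmx_id. Qed.
Lemma cast_add (R : comPzRingType) n n' (e : n = n') (A B : 'M[R]_n) :
  castmx (e,e) A + castmx (e,e) B = castmx (e,e) (A + B).
Proof. by case: n' / e; rewrite !castmx_id. Qed.
Lemma cast_scalar (R : comPzRingType) n n' (e : n = n') (c : R) :
  castmx (e,e) (c%:M : 'M_n) = c%:M.
Proof. by case: n' / e; rewrite !castmx_id. Qed.

Lemma scalar_cast (R : comPzRingType) n1 n' (e : (n1 + n1)%N = n') (c : R) :
  c%:M = castmx (e,e) (block_mx c%:M 0 0 c%:M).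
Proof. by case: n' / e; rewrite castmx_id scalar_mx_block. Qed.

Definition dot {R : comPzRingType} {n} (v w : 'rV[R]_n) := \sum_i v 0 i * w 0 i.

Lemma dot_rec (R : comPzRingType) n (v w : 'rV[R]_n.+1) :
  dot v w = v 0 ord0 * w 0 ord0 + dot (rtail v) (rtail w).
Proof. by rewrite /dot big_ord_recl; congr (_ + _); apply: eq_bigr => i _; rewrite !mxE. Qed.

Lemma suslin_ids (R : comPzRingType) m : forall v w v' w' : 'rV[R]_(m.+2),
  [/\ suslin m v w *m suslin_bar m v w = (dot v w)%:M,
      suslin_bar m v w *m suslin m v w = (dot v w)%:M,
      suslin m v w *m suslin_bar m v' w' + suslin m v' w' *m suslin_bar m v w
        = (dot v w' + dot v' w)%:M &
      suslin_bar m v w *m suslin m v' w' + suslin_bar m v' w' *m suslin m v w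
        = (dot v w' + dot v' w)%:M].
Proof.
elim: m => [|m IH] v w v' w'.
  have E : forall u : 'rV[R]_2, u 0 (lift ord0 ord0) = u 0 ord_max.
    by move=> u; congr (u 0 _); apply/val_inj.
  rewrite /suslin /suslin_bar /= /dot.
  split; apply/matrixP => i j; rewrite !mxE !big_ord_recl !big_ord0 !mxE;
  case: i => [[|[|i]] Hi] //; case: j => [[|[|j]] Hj] //=; rewrite ?mulr1n ?mulr0n ?E; ring.
have [I1 I2 _ _] := IH (rtail v) (rtail w) (rtail v') (rtail w').
have [_ _ I3 I4] := IH (rtail v) (rtail w) (rtail v') (rtail w').
have [_ _ I3' I4'] := IH (rtail v') (rtail w') (rtail v) (rtail w).
rewrite /suslin /suslin_bar in I1 I2 I3 I4 I3' I4'.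
rewrite /suslin /suslin_bar /= !cast_mul !cast_add !(@dot_rec _ _ v) !(@dot_rec _ _ v').
rewrite !mulmx_block.
split; rewrite [RHS](@scalar_cast _ _ _ (esym (expS_addn m))); congr castmx; rewrite ?cast_add ?mulmx_block ?add_block_mx; congr block_mx;
  rewrite ?mulmxN ?mulNmx ?opprK ?mul_scalar_mx ?mul_mx_scalar;
  idtac.

all: try (apply/matrixP => i j; rewrite !mxE; ring).
all: rewrite !scale_scalar_mx.
all: try rewrite [LHS]addrACA.
all: rewrite ?I1 ?I2 ?I3 ?I4 ?I3' ?I4'.

all: apply/matrixP => i j; rewrite !mxE; case: (i == j); rewrite ?mulr1n ?mulr0n; ring.
Qed.

Lemma K (V : zmodType) (x y z : V) : x + (y + z) = z + (y + x).
Proof. by rewrite (addrC x) (addrC y z) -addrA. Qed.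

Theorem lemma3p3 (R : comPzRingType) (m : nat) (vx wx vt wt : 'rV[R]_(m.+2))
    (a b : R) :
  let X := suslin m vx wx in let Xb := suslin_bar m vx wx in
  let T := suslin m vt wt in let Tb := suslin_bar m vt wt in
  let S := block_mx a%:M T (- Tb) b%:M in
  X *m Xb = 0 ->
  block_mx 1%:M X 0 1%:M *m S *m block_mx 1%:M 0 (- Xb) 1%:M =
    block_mx (a%:M - suslin_form m vx wx vt wt) (T + b *: X)
             (- Tb - b *: Xb) b%:M
  /\
  block_mx 1%:M 0 (- Xb) 1%:M *m S *m block_mx 1%:M X 0 1%:M =
    block_mx a%:M (T + a *: X) (- Tb - a *: Xb)
             (b%:M - suslin_form m vx wx vt wt).
Proof.
move=> X Xb T Tb S H.
have [H1 H2 H3 _] := @suslin_ids _ m vx wx vt wt.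
have [_ _ _ H4] := @suslin_ids _ m vx wx vt wt.
have HXbX : Xb *m X = 0 by rewrite /Xb /X H2 -H1 H.
have HF : Xb *m T + Tb *m X = suslin_form m vx wx vt wt.
  by rewrite /suslin_form H3 -H4.
rewrite /S; split; rewrite !mulmx_block; congr block_mx;
  rewrite ?mul1mx ?mulmx1 ?mul0mx ?mulmx0 ?addr0 ?add0r ?mulmxN ?mulNmx ?mulmxDl ?mulmxDr ?opprK
     ?mul_mx_scalar ?mul_scalar_mx ?scalerN ?mul1mx ?mulmx1.
- by rewrite -scalemxAl H scaler0 addr0 /suslin_form opprD addrA.
- by [].
- by [].
- by [].
- by [].
- by rewrite addrC.
- by rewrite addrC.
- rewrite mulNmx -scalemxAl HXbX scaler0 oppr0 add0r -HF.
  rewrite !mulNmx opprD; exact: K.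
Qed.
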